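(* Let $(\beta_{\rm sd},\beta_{\rm rd},\beta_{\rm sr})\in\mathbb{R}_+^3$ with $\beta_{\rm rd}>0$, and set $S=\mathsf{SNR}^{\beta_{\rm sd}}$, $I=\mathsf{SNR}^{\beta_{\rm rd}}$, $C=\mathsf{SNR}^{\beta_{\rm sr}}$. Then $$\liminf_{\mathsf{SNR}\to\infty}\frac{r^{\rm(LDA\text{-}HD)}}{\log(1+\mathsf{SNR})}\ge \beta_{\rm sd}+\frac{[\beta_{\rm rd}-\beta_{\rm sd}]^+[\beta_{\rm sr}-\beta_{\rm sd}]^+}{[\beta_{\rm rd}-\beta_{\rm sd}]^++[\beta_{\rm sr}-\beta_{\rm sd}]^+}$$ (with the fraction interpreted as $0$ when its denominator vanishes), i.e. the LDA rate achieves the gDoF upper bound of the G-HD-RC.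
   Context: $r^{\rm(LDA\text{-}HD)}:=\log(1+S)+\frac{\log(1+\frac{I}{1+S})\,D}{\log(1+\frac{I}{1+S})+D}$ with $D:=[\log(1+\frac{C}{1+S})-\log(1+\frac{S}{1+S})]^+$, an achievable rate of the Gaussian half-duplex relay channel $Y_r=\sqrt{C}X_s(1-S_r)+Z_r$, $Y_d=\sqrt S X_s+e^{j\theta}\sqrt I X_rS_r+Z_d$ (unit-power inputs, unit-variance independent complex Gaussian noises, relay state $S_r\in\{0,1\}$ with $0$ = listen, $1$ = transmit). $[x]^+=\max\{x,0\}$; logs base 2. *)

(* Defs.v *)
From Stdlib Require Import Reals Lra.
Open Scope R_scope.

Definition log2 (x : R) : R := ln x / ln 2.

Definition pos_part (x : R) : R := Rmax x 0.

Definition D_LDA (S C : R) : R :=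
  pos_part (log2 (1 + C / (1 + S)) - log2 (1 + S / (1 + S))).

Definition r_LDA_HD (S I C : R) : R :=
  log2 (1 + S)
  + (log2 (1 + I / (1 + S)) * D_LDA S C) / (log2 (1 + I / (1 + S)) + D_LDA S C).

Definition frac0 (a b : R) : R :=
  if Req_EM_T (a + b) 0 then 0 else a * b / (a + b).

Definition gdof_bound (bsd brd bsr : R) : R :=
  bsd + frac0 (pos_part (brd - bsd)) (pos_part (bsr - bsd)).

Definition liminf_ge_at_infty (f : R -> R) (L : R) : Prop :=
  forall eps : R, 0 < eps -> exists M : R, forall x : R, M < x -> L - eps <= f x.

(* Main.v *)
Require Import Defs.
From Stdlib Require Import Reals.
From Stdlib Require Import Lra Psatz.
Open Scope R_scope.

Lemma ln2_pos : 0 < ln 2.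
Proof. rewrite <- ln_1. apply ln_increasing; lra. Qed.

Lemma log2_le x y : 0 < x -> x <= y -> log2 x <= log2 y.
Proof.
  intros Hx Hxy. unfold log2. pose proof ln2_pos.
  apply Rmult_le_compat_r. left; apply Rinv_0_lt_compat; lra.
  destruct Hxy as [H1|H1]. left; apply ln_increasing; lra. subst; lra.
Qed.

Lemma log2_mult x y : 0 < x -> 0 < y -> log2 (x*y) = log2 x + log2 y.
Proof. intros. unfold log2. rewrite ln_mult by lra. field. pose proof ln2_pos; lra. Qed.

Lemma log2_2 : log2 2 = 1.
Proof. unfold log2. field. pose proof ln2_pos; lra. Qed.

Lemma log2_1 : log2 1 = 0.
Proof. unfold log2. rewrite ln_1. unfold Rdiv. ring. Qed.

Lemma log2_Rpower s b : 0 < s -> log2 (Rpower s b) = b * log2 s.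
Proof. intros. unfold log2, Rpower. rewrite ln_exp. unfold Rdiv. ring. Qed.

Lemma Rpower_pos s b : 0 < Rpower s b.
Proof. unfold Rpower. apply exp_pos. Qed.

Lemma div_le_div u v w z : 0 < v -> 0 < z -> u * z <= w * v -> u / v <= w / z.
Proof.
  intros Hv Hz H.
  apply (Rmult_le_reg_r (v*z)). nra.
  replace (u / v * (v * z)) with (u*z) by (field; lra).
  replace (w / z * (v * z)) with (w*v) by (field; lra). exact H.
Qed.

Lemma g_mono x y a d : 0 <= x -> 0 <= y -> x <= a -> y <= d ->
  x*y/(x+y) <= a*d/(a+d).
Proof.
  intros Hx Hy Ha Hd.
  destruct (Req_dec (x+y) 0) as [E|E].
  - assert (x = 0) by lra. assert (y = 0) by lra. subst.
    replace (0*0/(0+0)) with 0 by (unfold Rdiv; ring).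
    destruct (Req_dec (a+d) 0) as [E2|E2].
    + unfold Rdiv; rewrite E2, Rinv_0; lra.
    + unfold Rdiv. apply Rmult_le_pos. nra. left; apply Rinv_0_lt_compat; lra.
  - apply div_le_div; try lra.
    assert (a*d*(x+y) - x*y*(a+d) = a*x*(d-y) + d*y*(a-x)) by ring.
    assert (0 <= a*x*(d-y)) by (apply Rmult_le_pos; nra).
    assert (0 <= d*y*(a-x)) by (apply Rmult_le_pos; nra).
    lra.
Qed.

Lemma g_nonneg a d : 0 <= a -> 0 <= d -> 0 <= a*d/(a+d).
Proof.
  intros. replace 0 with (0*0/(0+0)) by (unfold Rdiv; rewrite Rplus_0_r, Rinv_0; ring).
  apply g_mono; lra.
Qed.

Lemma pos_part_ge x : x <= pos_part x.
Proof. unfold pos_part. apply Rmax_l. Qed.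
Lemma pos_part_nn x : 0 <= pos_part x.
Proof. unfold pos_part. apply Rmax_r. Qed.

Lemma g_lower p q L a d : 0 <= p -> 0 <= q -> 0 <= a -> 0 <= d ->
  p * L - 2 <= a -> q * L - 2 <= d ->
  1 + 2/p + 2/q + (p+q)/(p*q) <= L ->
  frac0 p q * L - 2 <= a*d/(a+d).
Proof.
  intros Hp Hq Ha Hd HA HD HL.
  pose proof (g_nonneg a d Ha Hd).
  destruct (Req_dec p 0) as [E|E].
  { subst. unfold frac0. destruct (Req_EM_T _ _); unfold Rdiv; nra. }
  destruct (Req_dec q 0) as [E'|E'].
  { subst. unfold frac0. destruct (Req_EM_T _ _); unfold Rdiv; nra. }
  assert (p > 0) by lra. assert (q > 0) by lra.
  unfold frac0. destruct (Req_EM_T _ _) as [E2|E2]; [lra|].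
  assert (0 <= 2/p) by (unfold Rdiv; apply Rmult_le_pos; [lra| left; apply Rinv_0_lt_compat; lra]).
  assert (0 <= 2/q) by (unfold Rdiv; apply Rmult_le_pos; [lra| left; apply Rinv_0_lt_compat; lra]).
  assert (0 <= (p+q)/(p*q)) by (unfold Rdiv; apply Rmult_le_pos; [lra| left; apply Rinv_0_lt_compat; nra]).
  assert (K1 : p * L >= 2 + p).
  { assert (p * (2/p) = 2) by (field; lra). nra. }
  assert (K2 : q * L >= 2 + q).
  { assert (q * (2/q) = 2) by (field; lra). nra. }
  assert (K3 : p*q*L >= p+q).
  { assert (p*q * ((p+q)/(p*q)) = p+q) by (field; lra). assert (p*q>0) by nra. nra. }
  set (x := p*L-2). set (y := q*L-2).
  apply Rle_trans with (x*y/(x+y)); [| apply g_mono; unfold x, y; lra].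
  replace (p*q/(p+q)*L - 2) with ((p*q*L - 2*(p+q))/(p+q)) by (field; lra).
  apply div_le_div; [lra| unfold x,y; lra|].
  unfold x, y.
  assert (E3 : (p * L - 2) * (q * L - 2) * (p + q) - (p * q * L - 2 * (p + q)) * (p * L - 2 + (q * L - 2))
     = 4*(p*q*L) - 4*(p+q)) by ring.
  lra.
Qed.

Theorem proposition6 (bsd brd bsr : R)
  (hsd : 0 <= bsd) (hrd : 0 < brd) (hsr : 0 <= bsr) :
  liminf_ge_at_infty
    (fun snr => r_LDA_HD (Rpower snr bsd) (Rpower snr brd) (Rpower snr bsr)
                / log2 (1 + snr))
    (gdof_bound bsd brd bsr).
Proof.
  intros eps Heps.
  set (p := pos_part (brd - bsd)). set (q := pos_part (bsr - bsd)).
  set (h := frac0 p q).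
  assert (Hp : 0 <= p) by apply pos_part_nn. assert (Hq : 0 <= q) by apply pos_part_nn.
  assert (Hh : 0 <= h).
  { unfold h, frac0. destruct (Req_EM_T _ _); [lra|]. apply g_nonneg; lra. }
  set (Lb := 1 + 2/p + 2/q + (p+q)/(p*q) + (2 + bsd + h)/eps).
  assert (0 <= 2/p) by (unfold Rdiv; destruct (Req_dec p 0) as [E|E];
     [rewrite E, Rinv_0; lra| apply Rmult_le_pos; [lra| left; apply Rinv_0_lt_compat; lra]]).
  assert (0 <= 2/q) by (unfold Rdiv; destruct (Req_dec q 0) as [E|E];
     [rewrite E, Rinv_0; lra| apply Rmult_le_pos; [lra| left; apply Rinv_0_lt_compat; lra]]).
  assert (0 <= (p+q)/(p*q)) by (unfold Rdiv; destruct (Req_dec (p*q) 0) as [E|E];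
     [rewrite E, Rinv_0; lra| apply Rmult_le_pos; [lra| left; apply Rinv_0_lt_compat; nra]]).
  assert (0 <= (2+bsd+h)/eps) by (unfold Rdiv; apply Rmult_le_pos; [lra| left; apply Rinv_0_lt_compat; lra]).
  pose proof ln2_pos.
  exists (exp (ln 2 * Lb)). intros snr Hsnr.
  assert (Hs0 : 0 < snr) by (pose proof (exp_pos (ln 2 * Lb)); lra).
  set (L := log2 snr).
  assert (HL : Lb < L).
  { unfold L, log2. apply ln_increasing in Hsnr; [|apply exp_pos]. rewrite ln_exp in Hsnr.
    apply (Rmult_lt_reg_r (ln 2)); [lra|]. replace (ln snr / ln 2 * ln 2) with (ln snr) by (field; lra). lra. }
  set (S := Rpower snr bsd). set (I := Rpower snr brd). set (C := Rpower snr bsr).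
  assert (HS : 0 < S) by apply Rpower_pos. assert (HI : 0 < I) by apply Rpower_pos.
  assert (HC : 0 < C) by apply Rpower_pos.
  assert (lS : log2 S = bsd * L) by (apply log2_Rpower; lra).
  assert (lI : log2 I = brd * L) by (apply log2_Rpower; lra).
  assert (lC : log2 C = bsr * L) by (apply log2_Rpower; lra).
  assert (HL0 : 0 < L) by (unfold Lb in HL; lra).
  assert (HS1 : 1 <= S).
  { destruct (Rle_or_lt 1 S) as [|H']; auto. exfalso.
    assert (Z0 : log2 S < log2 1).
    { unfold log2. apply Rmult_lt_compat_r. apply Rinv_0_lt_compat; lra. apply ln_increasing; lra. }
    rewrite log2_1, lS in Z0. nra. }
  assert (Hsn1 : 1 <= snr).
  { destruct (Rle_or_lt 1 snr) as [|H']; auto. exfalso.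
    assert (Z0 : log2 snr < log2 1).
    { unfold log2. apply Rmult_lt_compat_r. apply Rinv_0_lt_compat; lra. apply ln_increasing; lra. }
    rewrite log2_1 in Z0. fold L in Z0. lra. }
  assert (A1 : bsd * L <= log2 (1 + S)) by (rewrite <- lS; apply log2_le; lra).
  assert (B1 : log2 (1 + snr) <= 1 + L).
  { apply Rle_trans with (log2 (2 * snr)). apply log2_le; lra.
    rewrite log2_mult, log2_2 by lra. unfold L; lra. }
  assert (B0 : 0 < log2 (1 + snr)).
  { unfold log2. apply Rdiv_lt_0_compat; [|lra]. rewrite <- ln_1. apply ln_increasing; lra. }
  set (a := log2 (1 + I / (1 + S))).
  assert (Ha0 : 0 <= a).
  { unfold a. rewrite <- log2_1. apply log2_le; [lra|].
    assert (0 <= I/(1+S)) by (apply Rlt_le, Rdiv_lt_0_compat; lra). lra. }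
  assert (Hlow : forall X, 0 < X -> log2 X - 1 - bsd * L <= log2 (1 + X / (1 + S))).
  { intros X HX.
    apply Rle_trans with (log2 (X / (2 * S))).
    - replace X with ((X / (2*S)) * (2 * S)) at 1 by (field; lra).
      assert (0 < X/(2*S)) by (apply Rdiv_lt_0_compat; lra).
      rewrite log2_mult, log2_mult, log2_2, lS by lra. lra.
    - apply log2_le. apply Rdiv_lt_0_compat; lra.
      assert (X/(2*S) <= X/(1+S)).
      { apply div_le_div; nra. }
      assert (0 <= X/(1+S)) by (apply Rlt_le, Rdiv_lt_0_compat; lra). lra. }
  assert (Ha : p * L - 2 <= a).
  { unfold p, pos_part. destruct (Rmax_Rle (brd - bsd) 0 (Rmax (brd-bsd) 0)) as [Hm _].
    destruct (Rle_or_lt 0 (brd-bsd)).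
    - rewrite Rmax_left by lra. pose proof (Hlow I HI). rewrite lI in H5. unfold a. nra.
    - rewrite Rmax_right by lra. lra. }
  set (d := D_LDA S C).
  assert (Hd0 : 0 <= d) by apply pos_part_nn.
  assert (Hd : q * L - 2 <= d).
  { unfold q, d, D_LDA.
    assert (log2 (1 + S/(1+S)) <= 1).
    { apply Rle_trans with (log2 2); [|rewrite log2_2; lra]. apply log2_le.
      assert (0 <= S/(1+S)) by (apply Rlt_le, Rdiv_lt_0_compat; lra). lra.
      assert (S/(1+S) <= 1/1). { apply div_le_div; nra. }
      lra. }
    pose proof (Hlow C HC) as H6.
    rewrite lC in H6.
    pose proof (pos_part_ge (log2 (1 + C / (1 + S)) - log2 (1 + S / (1 + S)))).
    pose proof (pos_part_nn (log2 (1 + C / (1 + S)) - log2 (1 + S / (1 + S)))).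
    unfold pos_part at 1. destruct (Rle_or_lt 0 (bsr-bsd)).
    - rewrite Rmax_left by lra. unfold pos_part in *. nra.
    - rewrite Rmax_right by lra. unfold pos_part in *. lra. }
  assert (Hg : h * L - 2 <= a*d/(a+d)).
  { unfold h. apply g_lower; try lra. unfold Lb in HL. lra. }
  assert (Hg0 : 0 <= a*d/(a+d)) by (apply g_nonneg; lra).
  unfold r_LDA_HD. fold S. fold a. fold d. fold I.
  unfold gdof_bound. fold p q. fold h.
  assert (HL2 : (2 + bsd + h) <= eps * L).
  { assert (eps * ((2+bsd+h)/eps) = 2+bsd+h) by (field; lra). unfold Lb in HL. nra. }
  apply Rmult_le_reg_r with (log2 (1+snr)); [lra|].
  assert (E : forall u v, v <> 0 -> u / v * v = u) by (intros; field; auto).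
  rewrite E by lra.
  destruct (Rle_or_lt 0 (bsd + h - eps)).
  - nra.
  - nra.
Qed.
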